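(* Let $S$ be a zero-divisor free commutative $\Gamma$-semiring with zero having a left unity and a right unity. Then $S$ is a $\Gamma$-semifield if and only if for every non-constant fuzzy ideal $\mu$ of $S$ one has $\mu(x)=\mu(y)<\mu(0)$ for all $x,y\in S\setminus\{0\}$.
   Context: A $\Gamma$-semiring: $S$ and $\Gamma$ are additive commutative semigroups with a map $S\times\Gamma\times S\to S$, $(a,\alpha,b)\mapsto a\alpha b$, such that $(a+b)\alpha c=a\alpha c+b\alpha c$, $a\alpha(b+c)=a\alpha b+a\alpha c$, $a(\alpha+\beta)b=a\alpha b+a\beta b$, $a\alpha(b\beta c)=(a\alpha b)\beta c$. With zero: $(S,+)$, $(\Gamma,+)$ are monoids, $0_S\alpha x=0_S=x\alpha0_S$, $x0_\Gamma y=0_S$. Commutative: $a\alpha b=b\alpha a$ for all $a,b\in S,\alpha\in\Gamma$. Zero-divisor free: $a\alpha b=0$ implies $a=0$ or $\alpha=0$ or $b=0$. A left unity of $S$ is a finite family $e_i\in S,\delta_i\in\Gamma$ with $\sum_ie_i\delta_ia=a$ for all $a\in S$; a right unity is a finite family $\gamma_j\in\Gamma,f_j\in S$ with $\sum_ja\gamma_jf_j=a$ for all $a\in S$. A $\Gamma$-semifield is a commutative $\Gamma$-semiring such that for every $a\neq0$ in $S$ and $\alpha\neq0$ in $\Gamma$ there exist $b\in S,\beta\in\Gamma$ with $a\alpha b\beta d=d$ for all $d\in S$. A fuzzy ideal of $S$ is a map $\mu:S\to[0,1]$, not identically $0$, with $\mu(x+y)\ge\min[\mu(x),\mu(y)]$,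 $\mu(x\gamma y)\ge\mu(y)$ and $\mu(x\gamma y)\ge\mu(x)$ for all $x,y\in S,\gamma\in\Gamma$; by convention every fuzzy ideal satisfies $\mu(0)=1$. *)

(* Defs.v *)
From Stdlib Require Import Reals List.
Open Scope R_scope.

Record GammaData (S G : Type) := {
  addS : S -> S -> S;
  zeroS : S;
  addG : G -> G -> G;
  zeroG : G;
  gmul : S -> G -> S -> S
}.

Arguments addS {S G} _ _ _.
Arguments zeroS {S G} _.
Arguments addG {S G} _ _ _.
Arguments zeroG {S G} _.
Arguments gmul {S G} _ _ _ _.

Section Defs.
Context {S G : Type} (D : GammaData S G).

Local Notation "x +s y" := (addS D x y) (at level 50, left associativity).
Local Notation "x <+> y" := (addG D x y) (at level 50).
Local Notation m := (gmul D).
Local Notation z0 := (zeroS D).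

Definition is_GammaSemiring_with_zero : Prop :=
  (forall x y z, x +s (y +s z) = (x +s y) +s z) /\
  (forall x y, x +s y = y +s x) /\
  (forall x, x +s z0 = x) /\
  (forall a b c, a <+> (b <+> c) = (a <+> b) <+> c) /\
  (forall a b, a <+> b = b <+> a) /\
  (forall a, a <+> zeroG D = a) /\
  (forall a b c al, m (a +s b) al c = m a al c +s m b al c) /\
  (forall a b c al, m a al (b +s c) = m a al b +s m a al c) /\
  (forall a b al be, m a (al <+> be) b = m a al b +s m a be b) /\
  (forall a b c al be, m a al (m b be c) = m (m a al b) be c) /\
  (forall x al, m z0 al x = z0 /\ m x al z0 = z0) /\
  (forall x y, m x (zeroG D) y = z0).

Definition is_commutative : Prop :=
  forall a b al, m a al b = m b al a.

Definition zero_divisor_free : Prop :=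
  forall a al b, m a al b = z0 -> a = z0 \/ al = zeroG D \/ b = z0.

(* finite families are represented by lists *)
Definition has_left_unity : Prop :=
  exists l : list (S * G),
    forall a, fold_right (fun p acc => m (fst p) (snd p) a +s acc) z0 l = a.

Definition has_right_unity : Prop :=
  exists l : list (G * S),
    forall a, fold_right (fun p acc => m a (fst p) (snd p) +s acc) z0 l = a.

Definition is_GammaSemifield : Prop :=
  is_commutative /\
  forall a al, a <> z0 -> al <> zeroG D ->
    exists b be, forall d, m (m a al b) be d = d.

(* Fuzzy ideal, including the paper's convention mu(0) = 1. *)
Definition is_fuzzy_ideal (mu : S -> R) : Prop :=
  (forall x, 0 <= mu x <= 1)%R /\
  (exists x, mu x <> 0%R) /\
  (forall x y, Rmin (mu x) (mu y) <= mu (x +s y))%R /\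
  (forall x y g, mu y <= mu (m x g y) /\ mu x <= mu (m x g y))%R /\
  mu z0 = 1%R.

Definition non_constant (mu : S -> R) : Prop :=
  exists x y, mu x <> mu y.

End Defs.

(* Main.v *)
Require Import Defs.
From Stdlib Require Import Reals List Lra Classical ClassicalDescription.
Open Scope R_scope.

Lemma some_nonzero_gamma (S G : Type) (D : GammaData S G) :
  is_GammaSemiring_with_zero D -> has_left_unity D ->
  forall x, x <> zeroS D -> exists g, g <> zeroG D.
Proof.
  intros HS [l Hl] x Hx.
  destruct HS as (_&_&Hadd0&_&_&_&_&_&_&_&_&Hz).
  apply NNPP; intro Hn. apply Hx. rewrite <- (Hl x).
  clear Hl. induction l as [|p l IH]; simpl; auto.
  rewrite IH. assert (snd p = zeroG D) as ->.
  { apply NNPP; intro H; apply Hn; eauto. }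
  rewrite Hz. apply Hadd0.
Qed.

Theorem theorem3p10 (S G : Type) (D : GammaData S G) :
  is_GammaSemiring_with_zero D ->
  is_commutative D ->
  zero_divisor_free D ->
  has_left_unity D ->
  has_right_unity D ->
  (is_GammaSemifield D <->
   forall mu : S -> R, is_fuzzy_ideal D mu -> non_constant mu ->
     forall x y : S, x <> zeroS D -> y <> zeroS D ->
       mu x = mu y /\ mu y < mu (zeroS D)).
Proof.
  intros HS Hc Hzd Hlu Hru.
  pose proof HS as (HA&HC&H0&_&_&_&HDl&HDr&_&Hass&Hz&Hzg).
  split.
  - intros [_ Hsf] mu Hmu Hnc.
    destruct Hmu as (Hb&_&Hplus&Hmul&H0mu).
    assert (Hge : forall x d, x <> zeroS D -> mu x <= mu d).
    { intros x d Hx. destruct (some_nonzero_gamma _ _ D HS Hlu x Hx) as [g Hg].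
      destruct (Hsf x g Hx Hg) as [b [be Hbe]].
      rewrite <- (Hbe d).
      destruct (Hmul (gmul D x g b) d be) as [_ H1].
      destruct (Hmul x b g) as [_ H2]. lra. }
    intros x y Hx Hy.
    assert (Exy : mu x = mu y) by (pose proof (Hge x y Hx); pose proof (Hge y x Hy); lra).
    split; auto.
    pose proof (Hge y (zeroS D) Hy).
    destruct (Rle_lt_or_eq_dec _ _ H) as [Hlt|Heq]; auto.
    exfalso. destruct Hnc as [u [v Huv]]. apply Huv.
    assert (forall d, mu d = mu y).
    { intro d. destruct (classic (d = zeroS D)) as [->|Hd]; auto.
      pose proof (Hge y d Hy); pose proof (Hge d y Hd); lra. }
    rewrite !H1; auto.
  - intros Hfz. split; auto.
    intros a al Ha Hal.
    set (P := fun x => exists b, x = gmul D a al b).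
    assert (Hall : forall d, P d).
    { intro d. apply NNPP; intro Hd.
      set (mu := fun x => if excluded_middle_informative (P x) then 1 else 0).
      assert (P0 : P (zeroS D)) by (exists (zeroS D); symmetry; apply Hz).
      assert (Hfi : is_fuzzy_ideal D mu).
      { unfold is_fuzzy_ideal, mu; split; [|split; [|split; [|split]]].
        - intro x; destruct (excluded_middle_informative (P x)); lra.
        - exists (zeroS D). destruct (excluded_middle_informative (P (zeroS D))); [lra|tauto].
        - intros x y. destruct (excluded_middle_informative (P x)) as [[b1 E1]|];
          destruct (excluded_middle_informative (P y)) as [[b2 E2]|];
          destruct (excluded_middle_informative (P (addS D x y))) as [|Hn];
          try (unfold Rmin; destruct (Rle_dec _ _); lra).
          exfalso; apply Hn. exists (addS D b1 b2). subst. rewrite HDr; auto.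
        - intros x y g; split.
        + destruct (excluded_middle_informative (P y)) as [[b E]|];
          destruct (excluded_middle_informative (P (gmul D x g y))) as [|Hn]; try lra.
          exfalso; apply Hn. exists (gmul D b g x). subst.
          rewrite Hc, <- Hass; auto.
        + destruct (excluded_middle_informative (P x)) as [[b E]|];
          destruct (excluded_middle_informative (P (gmul D x g y))) as [|Hn]; try lra.
          exfalso; apply Hn. exists (gmul D b g y). subst.
          rewrite <- Hass; auto.
        - destruct (excluded_middle_informative (P (zeroS D))); tauto. }
      assert (Hnc : non_constant mu).
      { exists (zeroS D), d. unfold mu.
        destruct (excluded_middle_informative (P (zeroS D))); [|tauto].
        destruct (excluded_middle_informative (P d)); [tauto|lra]. }
      assert (Haa : gmul D a al a <> zeroS D).
      { intro E. destruct (Hzd _ _ _ E) as [?|[?|?]]; tauto. }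
      assert (Hd0 : d <> zeroS D) by (intro; subst; tauto).
      destruct (Hfz mu Hfi Hnc _ _ Haa Hd0) as [E _].
      revert E; unfold mu.
      destruct (excluded_middle_informative (P (gmul D a al a))) as [|Hn].
      + destruct (excluded_middle_informative (P d)); [tauto|lra].
      + exfalso; apply Hn; exists a; reflexivity. }
    destruct (Hall a) as [e Ee].
    destruct (Hall e) as [b Eb].
    exists b, al. intro d. rewrite <- Eb.
    destruct (Hall d) as [x Ex]. rewrite Ex.
    rewrite Hass, (Hc e a al), <- Ee. reflexivity.
Qed.
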